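(* Consider the discrete-time $Geo^X/G_r^{(a,b)}/1$ queue with single ($\delta=0$) or multiple ($\delta=1$) vacations described in the context, with $\rho<1$. Then for all $n\ge0$ and $a\le i\le b-1$, $$p^+_{n,i}=\Big[(1-\delta)\sum_{m=0}^{a-1}Q^+_m\sum_{j=m}^{a-1}e_{j,m}g_{i-j}+\big(p^+_i+Q^+_i\big)\Big]k^{(i)}_n,$$ where $k^{(i)}_n$ is the coefficient of $x^n$ in $K^{(i)}(x)$, i.e. the probability of $n$ arriving customers during the service time of a batch of size $i$.
   Context: Time is slotted. Fix integers $1\le a\le b$, $\lambda\in(0,1)$, $\bar\lambda=1-\lambda$, and a group-size distribution $(g_m)_{m\ge1}$ with finite mean $\bar g$ and pgf $G(z)=\sum_{m\ge1}g_mz^m$; $g_m=0$ for $m\le0$. In each slot a group arrives with probability $\lambda$, with size distribution $(g_m)$. Service follows the $(a,b)$ bulk rule (start only if at least $a$ wait; take all if $a\le r\le b$ wait, exactly $b$ if more than $b$ wait). A batch of size $r$ ($a\le r\le b$) has service-time pmf $s_r(n)$, $n\ge1$, pgf $S_r^*(z)$, mean $s_r$, $\mu_b=1/s_b$. Vacation times have pmf $v_n$, $n\ge1$, pgf $V^*(z)$, finite mean. $\delta=0$: single vacation (server stays dormant after a vacation until $a$ wait); $\delta=1$: multiple vacations. $\rho=\lambda\bar g/(b\mu_b)<1$. Stationary probabilities $p_{n,0}$ ($0\le n\le a-1$, dormant), $p_{n,r}(u)$ ($n\ge0$ waiting, batch size $a\le r\le b$ in service, remaining service $u\ge1$), $Q_n(u)$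 ($n\ge0$ waiting, on vacation, remaining vacation $u\ge1$) satisfy: (E1) $p_{0,0}=(1-\delta)[\bar\lambda p_{0,0}+\bar\lambda Q_0(1)]$; (E2) $p_{n,0}=(1-\delta)[\bar\lambda p_{n,0}+\lambda\sum_{i=1}^ng_ip_{n-i,0}+\bar\lambda Q_n(1)+\lambda\sum_{i=1}^ng_iQ_{n-i}(1)]$, $1\le n\le a-1$; (E3) $p_{0,r}(u)=\bar\lambda p_{0,r}(u+1)+s_r(u)\big[\sum_{m=a}^b(\bar\lambda p_{r,m}(1)+\lambda\sum_{i=1}^rg_ip_{r-i,m}(1))+\bar\lambda Q_r(1)+\lambda\sum_{i=1}^rg_iQ_{r-i}(1)+(1-\delta)\lambda\sum_{i=0}^{a-1}g_{r-i}p_{i,0}\big]$, $a\le r\le b$; (E4) $p_{n,r}(u)=\bar\lambda p_{n,r}(u+1)+\lambda\sum_{i=1}^ng_ip_{n-i,r}(u+1)$, $n\ge1$, $a\le r\le b-1$; (E5) $p_{n,b}(u)=\bar\lambda p_{n,b}(u+1)+\lambda\sum_{i=1}^ng_ip_{n-i,b}(u+1)+s_b(u)\big[\sum_{m=a}^b(\bar\lambda p_{n+b,m}(1)+\lambda\sum_{i=1}^{n+b}g_ip_{n+b-i,m}(1))+\bar\lambda Q_{n+b}(1)+\lambda\sum_{i=1}^{n+b}g_iQ_{n+b-i}(1)+(1-\delta)\lambda\sum_{i=0}^{a-1}g_{n+b-i}p_{i,0}\big]$, $n\ge1$; (E6) $Q_0(u)=\bar\lambda Q_0(u+1)+\bar\lambda(\sum_{m=a}^bp_{0,m}(1)+\delta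 Q_0(1))v_u$; (E7) $Q_n(u)=\bar\lambda Q_n(u+1)+\lambda\sum_{i=1}^ng_iQ_{n-i}(u+1)+v_u\big[\bar\lambda(\sum_{m=a}^bp_{n,m}(1)+\delta Q_n(1))+\lambda\sum_{i=1}^ng_i(\sum_{m=a}^bp_{n-i,m}(1)+\delta Q_{n-i}(1))\big]$, $1\le n\le a-1$; (E8) $Q_n(u)=\bar\lambda Q_n(u+1)+\lambda\sum_{i=1}^ng_iQ_{n-i}(u+1)$, $n\ge a$; (N) $(1-\delta)\sum_{n=0}^{a-1}p_{n,0}+\sum_{n,r,u}p_{n,r}(u)+\sum_{n,u}Q_n(u)=1$. With $\tau=\sum_{m\ge0}\sum_{r=a}^bp_{m,r}(1)+\sum_{m\ge0}Q_m(1)$: $p^+_{0,r}=\tau^{-1}\bar\lambda p_{0,r}(1)$, $p^+_{n,r}=\tau^{-1}(\bar\lambda p_{n,r}(1)+\lambda\sum_{i=1}^ng_ip_{n-i,r}(1))$ ($n\ge1$, $a\le r\le b$) are the joint queue/server-content probabilities at service completion epochs; $p^+_n=\sum_{r=a}^bp^+_{n,r}$; $Q^+_0=\tau^{-1}\bar\lambda Q_0(1)$, $Q^+_n=\tau^{-1}(\bar\lambda Q_n(1)+\lambda\sum_{i=1}^ng_iQ_{n-i}(1))$ ($n\ge1$). $K^{(r)}(x)=S_r^*(\bar\lambda+\lambda G(x))$. $e_{n,i}$ ($0\le i\le n$): $e_{n,n}=1$, $e_{n,n-1}=g_1$, $e_{n,i}=\sum_{j=i+1}^{n-1}e_{n,j}g_{j-i}+g_{n-i}$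 for $0\le i\le n-2$. *)

(* Defs.v *)
From Stdlib Require Import Reals Lra Lia List.
From Coquelicot Require Import Coquelicot.
Open Scope R_scope.

(* rsum m n f = f m + f (m+1) + ... + f n ; empty (= 0) when n < m. *)
Definition rsum (m n : nat) (f : nat -> R) : R :=
  fold_right Rplus 0 (map f (seq m (S n - m))).

(* indicator of delta (delta = true : multiple vacations, delta = 1) *)
Definition dR (delta : bool) : R := if delta then 1 else 0.

Definition pmf1 (f : nat -> R) : Prop :=
  f 0%nat = 0 /\ (forall n, 0 <= f n) /\ is_series f 1.

Definition finite_mean (f : nat -> R) : Prop :=
  ex_series (fun n => INR n * f n).

Definition mean (f : nat -> R) : R := Series (fun n => INR n * f n).

(* arr lam g u n = P(n customers arrive in u slots) = coefficient of x^n in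
   (1 - lam + lam G(x))^u, computed by the convolution recursion. *)
Fixpoint arr (lam : R) (g : nat -> R) (u n : nat) : R :=
  match u with
  | O => if Nat.eqb n 0 then 1 else 0
  | S u' => (1 - lam) * arr lam g u' n
            + lam * rsum 1 n (fun i => g i * arr lam g u' (n - i))
  end.

(* k^(r)_n = coefficient of x^n in K^(r)(x) = S_r^*(1-lam+lam G(x))
           = sum_u s_r(u) [x^n](1-lam+lam G(x))^u *)
Definition kcoef (lam : R) (g : nat -> R) (s : nat -> nat -> R) (r n : nat) : R :=
  Series (fun u => s r u * arr lam g u n).

(* e_{n,i}: e_{n,n} = 1, e_{n,n-1} = g_1,
   e_{n,i} = sum_{j=i+1}^{n-1} e_{n,j} g_{j-i} + g_{n-i} (0 <= i <= n-2).
   (The general clause also yields g_1 for i = n-1.)  Fuel-driven recursion;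
   fuel S n suffices since n - j < n - i. Values for i > n are unused (0). *)
Fixpoint eaux (g : nat -> R) (fuel n i : nat) : R :=
  match fuel with
  | O => 0
  | S f =>
    if Nat.eqb i n then 1
    else if Nat.ltb n i then 0
    else rsum (S i) (n - 1) (fun j => eaux g f n j * g (j - i)%nat) + g (n - i)%nat
  end.

Definition ecoef (g : nat -> R) (n i : nat) : R := eaux g (S n) n i.

(* Balance equations (E1)-(E8), normalization (N), nonnegativity.
   p0 n       = p_{n,0}        (0 <= n <= a-1)
   p n r u    = p_{n,r}(u)     (n >= 0, a <= r <= b, u >= 1)
   Q n u      = Q_n(u)         (n >= 0, u >= 1)                               *)
Definition stationary (a b : nat) (lam : R) (g : nat -> R) (s : nat -> nat -> R)
  (v : nat -> R) (delta : bool)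
  (p0 : nat -> R) (p : nat -> nat -> nat -> R) (Q : nat -> nat -> R) : Prop :=
  let lb := 1 - lam in
  let dd := dR delta in
  (forall n, (n <= a - 1)%nat -> 0 <= p0 n) /\
  (forall n r u, (a <= r <= b)%nat -> (1 <= u)%nat -> 0 <= p n r u) /\
  (forall n u, (1 <= u)%nat -> 0 <= Q n u) /\
  (* (E1) *)
  p0 0%nat = (1 - dd) * (lb * p0 0%nat + lb * Q 0%nat 1%nat) /\
  (* (E2) *)
  (forall n, (1 <= n <= a - 1)%nat ->
     p0 n = (1 - dd) * (lb * p0 n + lam * rsum 1 n (fun i => g i * p0 (n - i)%nat)
                        + lb * Q n 1%nat
                        + lam * rsum 1 n (fun i => g i * Q (n - i)%nat 1%nat))) /\
  (* (E3) *)
  (forall r u, (a <= r <= b)%nat -> (1 <= u)%nat ->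
     p 0%nat r u = lb * p 0%nat r (S u)
       + s r u * (rsum a b (fun m => lb * p r m 1%nat
                       + lam * rsum 1 r (fun i => g i * p (r - i)%nat m 1%nat))
                  + lb * Q r 1%nat
                  + lam * rsum 1 r (fun i => g i * Q (r - i)%nat 1%nat)
                  + (1 - dd) * lam * rsum 0 (a - 1) (fun i => g (r - i)%nat * p0 i))) /\
  (* (E4) *)
  (forall n r u, (1 <= n)%nat -> (a <= r <= b - 1)%nat -> (1 <= u)%nat ->
     p n r u = lb * p n r (S u)
       + lam * rsum 1 n (fun i => g i * p (n - i)%nat r (S u))) /\
  (* (E5) *)
  (forall n u, (1 <= n)%nat -> (1 <= u)%nat ->
     p n b u = lb * p n b (S u)
       + lam * rsum 1 n (fun i => g i * p (n - i)%nat b (S u))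
       + s b u * (rsum a b (fun m => lb * p (n + b)%nat m 1%nat
                       + lam * rsum 1 (n + b) (fun i => g i * p (n + b - i)%nat m 1%nat))
                  + lb * Q (n + b)%nat 1%nat
                  + lam * rsum 1 (n + b) (fun i => g i * Q (n + b - i)%nat 1%nat)
                  + (1 - dd) * lam * rsum 0 (a - 1) (fun i => g (n + b - i)%nat * p0 i))) /\
  (* (E6) *)
  (forall u, (1 <= u)%nat ->
     Q 0%nat u = lb * Q 0%nat (S u)
       + lb * (rsum a b (fun m => p 0%nat m 1%nat) + dd * Q 0%nat 1%nat) * v u) /\
  (* (E7) *)
  (forall n u, (1 <= n <= a - 1)%nat -> (1 <= u)%nat ->
     Q n u = lb * Q n (S u) + lam * rsum 1 n (fun i => g i * Q (n - i)%nat (S u))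
       + v u * (lb * (rsum a b (fun m => p n m 1%nat) + dd * Q n 1%nat)
                + lam * rsum 1 n (fun i => g i * (rsum a b (fun m => p (n - i)%nat m 1%nat)
                                                  + dd * Q (n - i)%nat 1%nat)))) /\
  (* (E8) *)
  (forall n u, (a <= n)%nat -> (1 <= u)%nat ->
     Q n u = lb * Q n (S u) + lam * rsum 1 n (fun i => g i * Q (n - i)%nat (S u))) /\
  (* (N), with the convergence of all the series involved *)
  (forall n r, (a <= r <= b)%nat -> ex_series (fun u => p n r (S u))) /\
  (forall n, ex_series (fun u => Q n (S u))) /\
  ex_series (fun n => rsum a b (fun r => Series (fun u => p n r (S u)))) /\
  ex_series (fun n => Series (fun u => Q n (S u))) /\
  (1 - dd) * rsum 0 (a - 1) p0
    + Series (fun n => rsum a b (fun r => Series (fun u => p n r (S u))))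
    + Series (fun n => Series (fun u => Q n (S u))) = 1.

(* tau and the service-completion-epoch probabilities.
   For n = 0 the formula below reduces to lb * p_{0,r}(1) (empty sum). *)
Definition tau (a b : nat) (p : nat -> nat -> nat -> R) (Q : nat -> nat -> R) : R :=
  Series (fun m => rsum a b (fun r => p m r 1%nat)) + Series (fun m => Q m 1%nat).

Definition pplus (a b : nat) (lam : R) (g : nat -> R)
  (p : nat -> nat -> nat -> R) (Q : nat -> nat -> R) (n r : nat) : R :=
  / tau a b p Q * ((1 - lam) * p n r 1%nat
                   + lam * rsum 1 n (fun i => g i * p (n - i)%nat r 1%nat)).

Definition pplus_tot (a b : nat) (lam : R) (g : nat -> R)
  (p : nat -> nat -> nat -> R) (Q : nat -> nat -> R) (n : nat) : R :=
  rsum a b (fun r => pplus a b lam g p Q n r).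

Definition Qplus (a b : nat) (lam : R) (g : nat -> R)
  (p : nat -> nat -> nat -> R) (Q : nat -> nat -> R) (n : nat) : R :=
  / tau a b p Q * ((1 - lam) * Q n 1%nat
                   + lam * rsum 1 n (fun i => g i * Q (n - i)%nat 1%nat)).

(* Main.v *)
Require Import Defs.
From Stdlib Require Import Reals Lra Lia List.
From Coquelicot Require Import Coquelicot.
Open Scope R_scope.

Lemma ex_series_zero : ex_series (fun _ : nat => 0).
Proof.
  exists 0. unfold is_series.
  apply (filterlim_ext (fun _ => 0)). intros n. induction n. rewrite sum_O; reflexivity. rewrite sum_Sn, <- IHn. simpl. unfold plus; simpl. ring.
  apply filterlim_const.
Qed.

Lemma Series_zero : Series (fun _ : nat => 0) = 0.
Proof.
  rewrite (Series_ext _ (fun n : nat => 0 * 0)) by (intros; ring).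
  rewrite Series_scal_l. ring.
Qed.

Lemma fold_c (l : list R) c : fold_right Rplus c l = fold_right Rplus 0 l + c.
Proof. induction l; simpl; [ring|rewrite IHl; ring]. Qed.

Lemma rsum_empty m n f : (n < m)%nat -> rsum m n f = 0.
Proof. intros H. unfold rsum. replace (S n - m)%nat with 0%nat by lia. reflexivity. Qed.

Lemma rsum_last m n f : (m <= S n)%nat -> rsum m (S n) f = rsum m n f + f (S n).
Proof.
  intros H. unfold rsum. replace (S (S n) - m)%nat with (S (S n - m)) by lia.
  rewrite seq_S, map_app, fold_right_app. cbn [map fold_right]. rewrite fold_c.
  replace (m + (S n - m))%nat with (S n) by lia. ring.
Qed.

Lemma rsum_first m n f : (m <= n)%nat -> rsum m n f = f m + rsum (S m) n f.
Proof.
  intros H. unfold rsum. replace (S n - m)%nat with (S (S n - S m)) by lia. reflexivity.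
Qed.

Lemma rsum_single n f : rsum n n f = f n.
Proof. rewrite rsum_first by lia. rewrite rsum_empty by lia. ring. Qed.

Lemma rsum_shift m n f : rsum (S m) (S n) f = rsum m n (fun i => f (S i)).
Proof.
  unfold rsum. simpl (S (S n) - S m)%nat. rewrite <- seq_shift, map_map. reflexivity.
Qed.

Lemma rsum_ext m n f h : (forall i, (m <= i <= n)%nat -> f i = h i) -> rsum m n f = rsum m n h.
Proof.
  intros Hf. unfold rsum. f_equal. apply map_ext_in. intros i Hi.
  apply in_seq in Hi. apply Hf. lia.
Qed.

Lemma rsum_plus m n f h : rsum m n (fun i => f i + h i) = rsum m n f + rsum m n h.
Proof.
  unfold rsum. generalize (seq m (S n - m)). intros l; induction l; simpl; [ring|rewrite IHl; ring].
Qed.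

Lemma rsum_scal m n c f : rsum m n (fun i => c * f i) = c * rsum m n f.
Proof.
  unfold rsum. generalize (seq m (S n - m)). intros l; induction l; simpl; [ring|rewrite IHl; ring].
Qed.

Lemma rsum_le m n f h : (forall i, (m <= i <= n)%nat -> f i <= h i) -> rsum m n f <= rsum m n h.
Proof.
  intros Hf. unfold rsum.
  assert (H: forall i, In i (seq m (S n - m)) -> f i <= h i).
  { intros i Hi. apply in_seq in Hi. apply Hf. lia. }
  revert H. generalize (seq m (S n - m)). intros l; induction l; simpl; intros H.
  lra. assert (f a <= h a) by auto. assert (fold_right Rplus 0 (map f l) <= fold_right Rplus 0 (map h l)) by auto. lra.
Qed.

Lemma rsum_zero m n : rsum m n (fun _ => 0) = 0.
Proof.
  transitivity (rsum m n (fun _ => 0 * 0)); [apply rsum_ext; intros; ring | rewrite rsum_scal; ring].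
Qed.

Lemma rsum_nonneg m n f : (forall i, (m <= i <= n)%nat -> 0 <= f i) -> 0 <= rsum m n f.
Proof. intros H. rewrite <- (rsum_zero m n). apply rsum_le. auto. Qed.

Lemma rsum_reflect N h : rsum 0 N (fun i => h (N - i)%nat) = rsum 0 N h.
Proof.
  revert h. induction N; intros h.
  - rewrite !rsum_single. reflexivity.
  - rewrite rsum_first by lia. rewrite rsum_shift.
    rewrite (rsum_ext 0 N _ (fun i => h (N - i)%nat)) by (intros; f_equal).
    rewrite IHN. rewrite rsum_last by lia. replace (S N - 0)%nat with (S N) by lia. ring.
Qed.

Lemma rsum_triangle A H :
  rsum 0 A (fun m => rsum m A (fun j => H j m)) = rsum 0 A (fun j => rsum 0 j (fun m => H j m)).
Proof.
  induction A.
  - rewrite !rsum_single. reflexivity.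
  - rewrite (rsum_ext 0 (S A) _ (fun m => rsum m A (fun j => H j m) + H (S A) m)).
    2:{ intros i Hi. apply rsum_last. lia. }
    rewrite rsum_plus. rewrite (rsum_last 0 A (fun m => rsum m A _)) by lia.
    rewrite (rsum_empty (S A) A) by lia. rewrite IHA.
    rewrite (rsum_last 0 A (fun j => rsum 0 j _)) by lia. rewrite Rplus_0_r; reflexivity.
Qed.

Lemma Series_rsum_list (F : nat -> nat -> R) (l : list nat) :
  (forall j, In j l -> ex_series (F j)) ->
  ex_series (fun k => fold_right Rplus 0 (map (fun j => F j k) l)) /\
  Series (fun k => fold_right Rplus 0 (map (fun j => F j k) l)) =
  fold_right Rplus 0 (map (fun j => Series (F j)) l).
Proof.
  induction l; simpl; intros H.
  - split. apply ex_series_zero. apply Series_zero.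
  - destruct IHl as [IH1 IH2]. intros; auto.
    assert (Ha : ex_series (F a)) by auto.
    split. exact (ex_series_plus _ _ Ha IH1).
    rewrite Series_plus; auto. rewrite IH2. reflexivity.
Qed.

Lemma Series_rsum (F : nat -> nat -> R) m n :
  (forall j, (m <= j <= n)%nat -> ex_series (F j)) ->
  ex_series (fun k => rsum m n (fun j => F j k)) /\
  Series (fun k => rsum m n (fun j => F j k)) = rsum m n (fun j => Series (F j)).
Proof.
  intros H. unfold rsum. apply Series_rsum_list. intros j Hj. apply in_seq in Hj. apply H. lia.
Qed.

Lemma ex_series_scal_R (c : R) (a : nat -> R) : ex_series a -> ex_series (fun n => c * a n).
Proof. intros H. exact (@ex_series_scal_l R_AbsRing R_NormedModule c a H). Qed.

Lemma Series_nonneg' f : (forall k, 0 <= f k) -> ex_series f -> 0 <= Series f.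
Proof.
  intros H1 H2. rewrite <- Series_zero. apply Series_le; auto. intros; split; [lra| auto].
Qed.

Lemma sum_f_R0_nonneg f n : (forall k, 0 <= f k) -> 0 <= sum_f_R0 f n.
Proof. intros H. induction n; simpl; auto. specialize (H (S n)). lra. Qed.

Lemma tail_le f : (forall k, 0 <= f k) -> ex_series f -> forall u, Series (fun k => f (u + k)%nat) <= Series f.
Proof.
  intros H1 H2 u. destruct u.
  - right. apply Series_ext. reflexivity.
  - rewrite (Series_incr_n f (S u)) by (auto; lia).
    pose proof (sum_f_R0_nonneg f (Init.Nat.pred (S u)) H1). lra.
Qed.

Lemma term_le f : (forall k, 0 <= f k) -> ex_series f -> forall N, f N <= Series f.
Proof.
  intros H1 H2 N. eapply Rle_trans; [|apply (tail_le f H1 H2 N)].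
  assert (He : ex_series (fun k => f (N + k)%nat)) by (apply ex_series_incr_n; auto).
  rewrite Series_incr_1 by auto. rewrite Nat.add_0_r.
  pose proof (Series_nonneg' (fun k => f (N + S k)%nat) (fun k => H1 _)).
  assert (ex_series (fun k => f (N + S k)%nat)).
  { apply (ex_series_incr_1 (fun k => f (N + k)%nat)). auto. }
  specialize (H H0). lra.
Qed.

Lemma rsum_sum_f_R0 f n : rsum 0 n f = sum_f_R0 f n.
Proof.
  induction n. rewrite rsum_single; reflexivity.
  rewrite rsum_last by lia. rewrite IHn. reflexivity.
Qed.

Lemma pmf_partial g : pmf1 g -> forall n, rsum 1 n g <= 1.
Proof.
  intros [H0 [H1 H2]] n.
  assert (E : Series g = 1) by (apply is_series_unique; auto).
  assert (Hex : ex_series g) by (exists 1; auto).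
  destruct n. rewrite rsum_empty by lia. lra.
  assert (rsum 0 (S n) g = rsum 1 (S n) g) by (rewrite rsum_first by lia; rewrite H0; ring).
  rewrite <- H, rsum_sum_f_R0.
  rewrite <- E, (Series_incr_n g (S (S n))) by (auto; lia).
  pose proof (Series_nonneg' (fun k => g (S (S n) + k)%nat) (fun k => H1 _)).
  assert (ex_series (fun k => g (S (S n) + k)%nat)) by (apply ex_series_incr_n; auto).
  specialize (H3 H4). simpl Init.Nat.pred. lra.
Qed.

Lemma arr_bounds lam g : pmf1 g -> 0 <= lam <= 1 -> forall u n, 0 <= arr lam g u n <= 1.
Proof.
  intros Hg Hl. pose proof (pmf_partial g Hg) as Hp. destruct Hg as [_ [Hg0 _]].
  induction u; intros n.
  - simpl. destruct (Nat.eqb n 0); lra.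
  - simpl.
    assert (0 <= rsum 1 n (fun i => g i * arr lam g u (n - i)%nat) <= 1).
    { split. apply rsum_nonneg. intros i _. specialize (IHu (n-i)%nat). specialize (Hg0 i). nra.
      eapply Rle_trans; [|apply (Hp n)]. apply rsum_le. intros i _.
      specialize (IHu (n-i)%nat). specialize (Hg0 i). nra. }
    specialize (IHu n). nra.
Qed.

Definition W (lam : R) (g : nat -> R) (sf : nat -> R) (u n : nat) : R :=
  Series (fun k => sf (u + k)%nat * arr lam g k n).

Lemma ex_W lam g sf : pmf1 g -> 0 <= lam <= 1 -> (forall k, 0 <= sf k) -> ex_series sf ->
  forall u n, ex_series (fun k => sf (u + k)%nat * arr lam g k n).
Proof.
  intros Hg Hl Hs Hex u n.
  apply (@ex_series_le R_AbsRing R_CompleteNormedModule) with (b := fun k => sf (u + k)%nat).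
  - intros k. change (norm (sf (u + k)%nat * arr lam g k n)) with (Rabs (sf (u + k)%nat * arr lam g k n)).
    pose proof (arr_bounds lam g Hg Hl k n). specialize (Hs (u+k)%nat).
    rewrite Rabs_pos_eq by nra. nra.
  - apply ex_series_incr_n. auto.
Qed.

Lemma W_bounds lam g sf : pmf1 g -> 0 <= lam <= 1 -> (forall k, 0 <= sf k) -> ex_series sf ->
  forall u n, 0 <= W lam g sf u n <= Series sf.
Proof.
  intros Hg Hl Hs Hex u n. unfold W.
  pose proof (ex_W lam g sf Hg Hl Hs Hex u n).
  split.
  - apply Series_nonneg'; auto. intros k. pose proof (arr_bounds lam g Hg Hl k n). specialize (Hs (u+k)%nat). nra.
  - eapply Rle_trans; [|apply (tail_le sf Hs Hex u)]. apply Series_le.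
    intros k. pose proof (arr_bounds lam g Hg Hl k n). specialize (Hs (u+k)%nat). nra.
    apply ex_series_incr_n; auto.
Qed.

Lemma W_step lam g sf : pmf1 g -> 0 <= lam <= 1 -> (forall k, 0 <= sf k) -> ex_series sf ->
  forall u n, W lam g sf u n = sf u * arr lam g 0 n + (1 - lam) * W lam g sf (S u) n
      + lam * rsum 1 n (fun j => g j * W lam g sf (S u) (n - j)%nat).
Proof.
  intros Hg Hl Hs Hex u n. unfold W at 1.
  pose proof (ex_W lam g sf Hg Hl Hs Hex) as HW.
  rewrite Series_incr_1 by auto. rewrite Nat.add_0_r.
  rewrite (Series_ext _ (fun k => (1 - lam) * (sf (S u + k)%nat * arr lam g k n)
       + lam * rsum 1 n (fun j => g j * (sf (S u + k)%nat * arr lam g k (n - j)%nat)))).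
  2:{ intros k. cbn [arr]. replace (u + S k)%nat with (S u + k)%nat by lia.
      rewrite (rsum_ext 1 n (fun j => g j * (sf (S u + k)%nat * arr lam g k (n - j)%nat))
         (fun j => sf (S u + k)%nat * (g j * arr lam g k (n - j)%nat))) by (intros; ring).
      rewrite rsum_scal. ring. }
  destruct (Series_rsum (fun j k => g j * (sf (S u + k)%nat * arr lam g k (n - j)%nat)) 1 n) as [E1 E2].
  { intros j _. apply (ex_series_scal_R (g j)). apply HW. }
  rewrite Series_plus.
  2:{ apply (ex_series_scal_R (1 - lam)). apply HW. }
  2:{ apply (ex_series_scal_R lam). exact E1. }
  rewrite !Series_scal_l. rewrite E2. unfold W.
  rewrite <- Rplus_assoc. f_equal. f_equal. apply rsum_ext. intros j _. rewrite Series_scal_l. reflexivity.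
Qed.

Lemma eaux_S g f n i : eaux g (S f) n i =
  if Nat.eqb i n then 1 else if Nat.ltb n i then 0
  else rsum (S i) (n - 1) (fun j => eaux g f n j * g (j - i)%nat) + g (n - i)%nat.
Proof. reflexivity. Qed.

Lemma eaux_fuel g n : forall f j, (n - j < f)%nat -> eaux g f n j = eaux g (S f) n j.
Proof.
  induction f; intros j Hj. lia.
  rewrite (eaux_S g (S f) n j), (eaux_S g f n j).
  destruct (Nat.eqb j n) eqn:E1; auto. destruct (Nat.ltb n j) eqn:E2; auto.
  apply Nat.eqb_neq in E1. apply Nat.ltb_ge in E2.
  f_equal. apply rsum_ext. intros i Hi. f_equal. apply IHf. lia.
Qed.

Lemma ecoef_diag g n : ecoef g n n = 1.
Proof. unfold ecoef. rewrite eaux_S, Nat.eqb_refl. reflexivity. Qed.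

Lemma ecoef_rec g n k : (k < n)%nat ->
  ecoef g n k = rsum (S k) n (fun j => ecoef g n j * g (j - k)%nat).
Proof.
  intros Hk. unfold ecoef at 1. rewrite eaux_S.
  destruct (Nat.eqb k n) eqn:E1. apply Nat.eqb_eq in E1; lia.
  destruct (Nat.ltb n k) eqn:E2. apply Nat.ltb_lt in E2; lia.
  destruct n as [|n']. lia.
  replace (S n' - 1)%nat with n' by lia.
  rewrite (rsum_last (S k) n') by lia. rewrite ecoef_diag. rewrite Rmult_1_l.
  f_equal. apply rsum_ext. intros j Hj. unfold ecoef. f_equal. apply eaux_fuel. lia.
Qed.

Lemma e_identity g (x q : nat -> R) n : g 0%nat = 0 ->
  (forall m, (m <= n)%nat -> q m = x m - rsum 1 m (fun i => g i * x (m - i)%nat)) ->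
  rsum 0 n (fun m => ecoef g n m * q m) = x n.
Proof.
  intros Hg0 Hq.
  rewrite (rsum_ext 0 n _ (fun m => ecoef g n m * x m - rsum 0 m (fun k => ecoef g n m * g (m - k)%nat * x k))).
  2:{ intros m Hm. rewrite Hq by lia.
      assert (E : rsum 1 m (fun i => g i * x (m - i)%nat) = rsum 0 m (fun k => g (m - k)%nat * x k)).
      { rewrite <- (rsum_reflect m (fun k => g (m - k)%nat * x k)).
        rewrite (rsum_first 0 m) by lia. replace (m - (m - 0))%nat with 0%nat by lia. rewrite Hg0, Rmult_0_l, Rplus_0_l.
        apply rsum_ext. intros i Hi. f_equal. f_equal. lia. }
      rewrite E. rewrite (rsum_ext 0 m (fun k => ecoef g n m * g (m-k)%nat * x k) (fun k => ecoef g n m * (g (m-k)%nat * x k))) by (intros; ring).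
      rewrite rsum_scal; ring. }
  rewrite (rsum_ext 0 n _ (fun m => ecoef g n m * x m + (-1) * rsum 0 m (fun k => ecoef g n m * g (m - k)%nat * x k)))
    by (intros; ring).
  rewrite rsum_plus, rsum_scal.
  rewrite <- (rsum_triangle n (fun m k => ecoef g n m * g (m - k)%nat * x k)).
  rewrite (rsum_ext 0 n (fun k => rsum k n (fun j => ecoef g n j * g (j - k)%nat * x k))
     (fun k => x k * rsum (S k) n (fun j => ecoef g n j * g (j - k)%nat))).
  2:{ intros k Hk. rewrite rsum_first by lia. rewrite Nat.sub_diag, Hg0.
      rewrite <- rsum_scal. rewrite Rmult_0_r, Rmult_0_l, Rplus_0_l. apply rsum_ext. intros; ring. }
  destruct n as [|n'].
  - rewrite !rsum_single. rewrite rsum_empty by lia. rewrite ecoef_diag. ring.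
  - rewrite !(rsum_last 0 n') by lia. rewrite (rsum_empty (S (S n'))) by lia.
    rewrite ecoef_diag.
    rewrite (rsum_ext 0 n' (fun k => x k * rsum (S k) (S n') _) (fun k => ecoef g (S n') k * x k)).
    ring.
    intros k Hk. rewrite <- ecoef_rec by lia. ring.
Qed.

Lemma geom_zero (q z M : R) : Rabs q < 1 -> (forall N, Rabs z <= Rabs (q ^ N) * M) -> z = 0.
Proof.
  intros Hq H. destruct (Req_dec z 0) as [|Hz]; auto. exfalso.
  assert (Hz' : 0 < Rabs z) by (apply Rabs_pos_lt; auto).
  assert (HM : Rabs z <= M) by (specialize (H 0%nat); simpl in H; rewrite Rabs_R1 in H; lra).
  destruct (pow_lt_1_zero q Hq (Rabs z / (2 * M))) as [N HN].
  { apply Rdiv_lt_0_compat; lra. }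
  specialize (HN N (le_n _)). specialize (H N).
  assert (Rabs (q ^ N) * M < Rabs z / (2 * M) * M) by (apply Rmult_lt_compat_r; lra).
  replace (Rabs z / (2 * M) * M) with (Rabs z / 2) in H0 by (field; lra). lra.
Qed.

Lemma P_solution lam g sf (P : nat -> nat -> R) C :
  pmf1 g -> 0 < lam < 1 -> (forall k, 0 <= sf k) -> ex_series sf ->
  (forall u, (1 <= u)%nat -> P 0%nat u = (1 - lam) * P 0%nat (S u) + sf u * C) ->
  (forall n u, (1 <= n)%nat -> (1 <= u)%nat ->
     P n u = (1 - lam) * P n (S u) + lam * rsum 1 n (fun j => g j * P (n - j)%nat (S u))) ->
  (forall n u, (1 <= u)%nat -> 0 <= P n u) ->
  (forall n, ex_series (fun u => P n (S u))) ->
  forall n u, (1 <= u)%nat -> P n u = C * W lam g sf u n.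
Proof.
  intros Hg Hl Hs Hex H0 H1 Hnn HPex n.
  assert (Hl' : 0 <= lam <= 1) by lra.
  induction n as [n IH] using Wf_nat.lt_wf_ind.
  set (Z := fun u => P n u - C * W lam g sf u n).
  assert (Hstep : forall u, (1 <= u)%nat -> Z u = (1 - lam) * Z (S u)).
  { intros u Hu. unfold Z. rewrite (W_step lam g sf Hg Hl' Hs Hex u n).
    destruct n as [|n'].
    - rewrite H0 by auto. rewrite rsum_empty by lia. simpl arr. ring.
    - rewrite H1 by (auto; lia). simpl (arr lam g 0 (S n')).
      rewrite (rsum_ext 1 (S n') (fun j => g j * P (S n' - j)%nat (S u))
                 (fun j => C * (g j * W lam g sf (S u) (S n' - j)%nat))).
      2:{ intros j Hj. rewrite IH by lia. ring. }
      rewrite rsum_scal. ring. }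
  assert (Hiter : forall N u, (1 <= u)%nat -> Z u = (1 - lam) ^ N * Z (u + N)%nat).
  { induction N; intros u Hu. rewrite Nat.add_0_r. simpl; ring.
    rewrite IHN by auto. rewrite Hstep by lia. replace (S (u + N)) with (u + S N)%nat by lia.
    simpl; ring. }
  set (SP := Series (fun u => P n (S u))).
  set (SS := Series sf).
  assert (Hbound : forall u, (1 <= u)%nat -> Rabs (Z u) <= SP + Rabs C * SS).
  { intros u Hu. unfold Z.
    assert (HP : 0 <= P n u <= SP).
    { split. apply Hnn; auto.
      replace u with (S (u - 1)) by lia.
      apply (term_le (fun u => P n (S u))); auto. intros; apply Hnn; lia. }
    pose proof (W_bounds lam g sf Hg Hl' Hs Hex u n) as HW. fold SS in HW.
    pose proof (Rle_abs C). pose proof (Rle_abs (-C)). rewrite Rabs_Ropp in H2.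
    apply Rabs_le. split; nra. }
  intros u Hu.
  assert (Z u = 0).
  { apply (geom_zero (1 - lam) (Z u) (SP + Rabs C * SS)).
    rewrite Rabs_pos_eq; lra.
    intros N. rewrite (Hiter N u Hu). rewrite Rabs_mult.
    apply Rmult_le_compat_l. apply Rabs_pos. apply Hbound. lia. }
  unfold Z in H. lra.
Qed.

Theorem mainTheorem5
  (a b : nat) (lam : R) (g : nat -> R) (s : nat -> nat -> R) (v : nat -> R)
  (delta : bool) (p0 : nat -> R) (p : nat -> nat -> nat -> R) (Q : nat -> nat -> R)
  (Hab : (1 <= a <= b)%nat)
  (Hlam : 0 < lam < 1)
  (Hg : pmf1 g) (Hgm : finite_mean g)
  (Hs : forall r, (a <= r <= b)%nat -> pmf1 (s r) /\ finite_mean (s r))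
  (Hv : pmf1 v) (Hvm : finite_mean v)
  (Hrho : lam * mean g / (INR b * / mean (s b)) < 1)
  (Hst : stationary a b lam g s v delta p0 p Q) :
  forall n i, (a <= i <= b - 1)%nat ->
    pplus a b lam g p Q n i =
      ((1 - dR delta) *
         rsum 0 (a - 1) (fun m => Qplus a b lam g p Q m *
                            rsum m (a - 1) (fun j => ecoef g j m * g (i - j)%nat))
       + (pplus_tot a b lam g p Q i + Qplus a b lam g p Q i))
      * kcoef lam g s i n.
Proof.
  intros n i Hi.
  unfold stationary in Hst. cbv zeta in Hst.
  destruct Hst as [Hp0nn [Hpnn [HQnn [E1 [E2 [E3 [E4 [E5 [E6 [E7 [E8 [Hexp [HexQ _]]]]]]]]]]]]].
  assert (Hai : (a <= i <= b)%nat) by lia.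
  destruct (Hs i Hai) as [[Hs0 [Hsnn Hsser]] _].
  assert (Hsex : ex_series (s i)) by (exists 1; auto).
  assert (Hl' : 0 <= lam <= 1) by lra.
  set (C := rsum a b (fun m => (1 - lam) * p i m 1%nat
                       + lam * rsum 1 i (fun j => g j * p (i - j)%nat m 1%nat))
                  + (1 - lam) * Q i 1%nat
                  + lam * rsum 1 i (fun j => g j * Q (i - j)%nat 1%nat)
                  + (1 - dR delta) * lam * rsum 0 (a - 1) (fun j => g (i - j)%nat * p0 j)).
  assert (HP : forall n u, (1 <= u)%nat -> p n i u = C * W lam g (s i) u n).
  { apply (P_solution lam g (s i) (fun n u => p n i u) C); try assumption.

    - intros u Hu. rewrite E3 by (auto; lia). unfold C. ring.
    - intros n' u H H'. apply E4; lia.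
    - intros. apply Hpnn; lia.
    - intros. apply Hexp; lia. }
  assert (HL : pplus a b lam g p Q n i = / tau a b p Q * C * kcoef lam g s i n).
  { unfold pplus. rewrite HP by lia.
    rewrite (rsum_ext 1 n _ (fun j => C * (g j * W lam g (s i) 1 (n - j)%nat))).
    2:{ intros j Hj. rewrite HP by lia. ring. }
    rewrite rsum_scal.
    assert (E : kcoef lam g s i n = W lam g (s i) 0 n) by reflexivity.
    rewrite E, (W_step lam g (s i) Hg Hl' Hsnn Hsex 0 n), Hs0. ring. }
  rewrite HL. f_equal.
  unfold pplus_tot, pplus, Qplus. rewrite rsum_scal.
  assert (HX : (1 - dR delta) * rsum 0 (a - 1) (fun m => / tau a b p Q * ((1 - lam) * Q m 1%nat
                   + lam * rsum 1 m (fun j => g j * Q (m - j)%nat 1%nat)) *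
                   rsum m (a - 1) (fun j => ecoef g j m * g (i - j)%nat))
             = / tau a b p Q * ((1 - dR delta) * lam * rsum 0 (a - 1) (fun j => g (i - j)%nat * p0 j))).
  { destruct delta; simpl dR.
    - ring.
    - set (q := fun m => (1 - lam) * Q m 1%nat + lam * rsum 1 m (fun j => g j * Q (m - j)%nat 1%nat)).
      set (x := fun m => lam * p0 m).
      assert (Hq : forall m, (m <= a - 1)%nat -> q m = x m - rsum 1 m (fun k => g k * x (m - k)%nat)).
      { intros m Hm. unfold q, x.
        rewrite (rsum_ext 1 m (fun k => g k * (lam * p0 (m - k)%nat)) (fun k => lam * (g k * p0 (m - k)%nat)))
          by (intros; ring).
        rewrite rsum_scal.
        destruct m as [|m'].
        - rewrite !rsum_empty by lia. simpl dR in E1. lra.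
        - specialize (E2 (S m')). simpl dR in E2. specialize (E2 ltac:(lia)). lra. }
      rewrite (rsum_ext 0 (a - 1) _ (fun m => rsum m (a - 1) (fun j => / tau a b p Q * (ecoef g j m * q m) * g (i - j)%nat))).
      2:{ intros m Hm. fold (q m).
          rewrite (rsum_ext m (a - 1) (fun j => / tau a b p Q * (ecoef g j m * q m) * g (i - j)%nat)
                    (fun j => (/ tau a b p Q * q m) * (ecoef g j m * g (i - j)%nat))) by (intros; ring).
          rewrite rsum_scal. ring. }
      rewrite (rsum_triangle (a - 1) (fun j m => / tau a b p Q * (ecoef g j m * q m) * g (i - j)%nat)).
      rewrite (rsum_ext 0 (a - 1) _ (fun j => (/ tau a b p Q * lam) * (g (i - j)%nat * p0 j))).
      2:{ intros j Hj.
          rewrite (rsum_ext 0 j _ (fun m => (/ tau a b p Q * g (i - j)%nat) * (ecoef g j m * q m))) by (intros; ring).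
          rewrite rsum_scal. rewrite (e_identity g x q j).
          unfold x; ring. destruct Hg as [Hg0 _]; auto. intros m Hm. apply Hq. lia. }
      rewrite rsum_scal. ring. }
  rewrite HX. unfold C. ring.
Qed.
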